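(* The comodule configuration $u:\mathbb B_{\bullet,0}\to\mathbf I$ is complete: defining $t_{\top+1}:\mathbb B_{i,j}\to\mathbb B_{i+1,j}$ by moving the discrete part of the bottom layer of the poset (the elements of the first poset layer comparable to no other element of $P$) into a new top layer of the set, the maps $t_{\top+1}$ are sections of the top vertical face maps $e_\top=e_{i+1}:\mathbb B_{i+1,j}\to\mathbb B_{i,j}$ and are monomorphisms of groupoids; they provide a left pointing.
   Context: For $n\ge0$, $\underline n=\{1,\dots,n\}$. $\mathbf I$ is the simplicial groupoid of layered finite sets ($\mathbf I_n$: maps $S\to\underline n$, $S$ a finite set). For $i,j\ge0$, $\mathbb B_{i,j}$ is the groupoid of pairs $(a:S\to\underline i,\ b:P\to\underline{j+1})$ with $S$ a finite set and $P$ a finite poset with monotone layering $b$, morphisms pairs of isomorphisms over the layerings. Vertical maps: $e_0:\mathbb B_{i,j}\to\mathbb B_{i-1,j}$ deletes the first set layer, $e_k$ ($0<k<i$) joins set layers $k,k+1$, and the top face map $e_i$ removes the last set layer and adds its elements, discretely ordered and incomparable with all of $P$, to the first poset layer; $t_k$ inserts an empty $(k+1)$st set layer. The augmentation $u:\mathbb B_{i,0}\to\mathbf I_i$ deletes the poset. A comodule configuration is a culf map from a Segal groupoid to a decomposition space; it is left pointed if equipped with extra top degeneracy maps $t_{\top+1}$ that are sections of the top face maps $e_\top$, and complete if these are monomorphisms (maps of groupoids whose homotopy fibres are empty or contractible). *)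

(* Defs.v *)
(* Layers {1,..,n} are encoded as 'I_n = {0,..,n-1}. *)
From mathcomp Require Import all_boot.
Set Warnings "-notation-overridden".

(* Objects of B_{i,j}: a finite set S layered over {1..i}, and a finite
   poset P with a monotone layering over {1..j+1}.                     *)
Record BObj (i j : nat) := {
  bS : finType;
  bA : bS -> 'I_i;
  bP : finType;
  ble : rel bP;
  ble_refl : reflexive ble;
  ble_anti : antisymmetric ble;
  ble_trans : transitive ble;
  bB : bP -> 'I_j.+1;
  bB_mono : forall p q, ble p q -> bB p <= bB q }.
Arguments bS {i j} _.
Arguments bA {i j} _ _.
Arguments bP {i j} _.
Arguments ble {i j} _ _ _.
Arguments bB {i j} _ _.

Record BHom (i j : nat) (X Y : BObj i j) := {
  hS : bS X -> bS Y;
  hSinv : bS Y -> bS X;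
  hS_K : cancel hS hSinv;
  hS_K' : cancel hSinv hS;
  hS_a : forall s, bA Y (hS s) = bA X s;
  hP : bP X -> bP Y;
  hPinv : bP Y -> bP X;
  hP_K : cancel hP hPinv;
  hP_K' : cancel hPinv hP;
  hP_b : forall p, bB Y (hP p) = bB X p;
  hP_le : forall p q, ble Y (hP p) (hP q) = ble X p q }.

Arguments BHom {i j} X Y.
Arguments hS {i j X Y} _ _.
Arguments hSinv {i j X Y} _ _.
Arguments hP {i j X Y} _ _.
Arguments hPinv {i j X Y} _ _.
Arguments hS_K {i j X Y} _ _.
Arguments hS_K' {i j X Y} _ _.
Arguments hS_a {i j X Y} _ _.
Arguments hP_K {i j X Y} _ _.
Arguments hP_K' {i j X Y} _ _.
Arguments hP_b {i j X Y} _ _.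
Arguments hP_le {i j X Y} _ _ _.
Arguments ble_refl {i j} _ _.
Arguments ble_anti {i j} _ _ _ _.
Arguments ble_trans {i j} _ _ _ _ _ _.
Arguments bB_mono {i j} _ _ _ _.

Definition heq (i j : nat) (X Y : BObj i j) (f g : BHom X Y) : Prop :=
  (forall s, hS f s = hS g s) /\ (forall p, hP f p = hP g p).
Arguments heq {i j X Y} _ _.

Lemma hS_inv_a i j (X Y : BObj i j) (f : BHom X Y) y : bA X (hSinv f y) = bA Y y.
Proof. by rewrite -(hS_a f) hS_K'. Qed.
Lemma hP_inv_b i j (X Y : BObj i j) (f : BHom X Y) y : bB X (hPinv f y) = bB Y y.
Proof. by rewrite -(hP_b f) hP_K'. Qed.
Lemma hP_inv_le i j (X Y : BObj i j) (f : BHom X Y) p q :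
  ble X (hPinv f p) (hPinv f q) = ble Y p q.
Proof. by rewrite -(hP_le f) !hP_K'. Qed.

Lemma sig_eqE (T : Type) (P : T -> bool) (u v : {x : T | P x}) :
  sval u = sval v -> u = v.
Proof.
case: u v => [x px] [y py] /= E; subst y; congr exist; exact: bool_irrelevance.
Qed.

Definition hcomp (i j : nat) (X Y Z : BObj i j) (g : BHom Y Z) (f : BHom X Y)
  : BHom X Z.
Proof.
refine (@Build_BHom i j X Z (hS g \o hS f) (hSinv f \o hSinv g) _ _ _
                            (hP g \o hP f) (hPinv f \o hPinv g) _ _ _ _).
- by move=> s /=; rewrite !hS_K.
- by move=> s /=; rewrite !hS_K'.
- by move=> s /=; rewrite !hS_a.
- by move=> s /=; rewrite !hP_K.
- by move=> s /=; rewrite !hP_K'.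
- by move=> s /=; rewrite !hP_b.
- by move=> p q /=; rewrite !hP_le.
Defined.
Arguments hcomp {i j X Y Z} _ _.

(* Top vertical face map e_top = e_{i+1} : B_{i+1,j} -> B_{i,j}:
   removes the last set layer and adds its elements, discretely ordered
   and incomparable with all of P, to the first poset layer.           *)
Section ETop.
Variables i j : nat.

Definition eS (X : BObj i.+1 j) : finType := {x : bS X | (bA X x : nat) < i}.
Definition eLast (X : BObj i.+1 j) : finType := {x : bS X | (bA X x : nat) == i}.
Definition eP (X : BObj i.+1 j) : finType := (bP X + eLast X)%type.

Definition eA (X : BObj i.+1 j) (x : eS X) : 'I_i := Ordinal (valP x).

Definition ele (X : BObj i.+1 j) : rel (eP X) := fun u v =>
  match u, v with
  | inl p, inl q => ble X p q
  | inr x, inr y => x == y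
  | _, _ => false
  end.

Definition eB (X : BObj i.+1 j) (u : eP X) : 'I_j.+1 :=
  match u with inl p => bB X p | inr _ => ord0 end.

Definition eObj (X : BObj i.+1 j) : BObj i j.
Proof.
refine (@Build_BObj i j (eS X) (@eA X) (eP X) (@ele X) _ _ _ (@eB X) _).
- by case=> [p|x] /=; [apply: ble_refl|].
- case=> [p|x] [q|y] //=; first by move=> H; congr inl; apply: ble_anti.
  by case/andP=> /eqP -> _.
- case=> [p|x] [q|y] [r|z] //=; first by apply: ble_trans.
  by move=> /eqP -> /eqP ->.
- case=> [p|x] [q|y] //=; first by apply: bB_mono.
Defined.

Lemma eS_pf (X Y : BObj i.+1 j) (f : BHom X Y) (x : bS X) (P : pred nat) :
  P (bA X x) -> P (bA Y (hS f x)).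
Proof. by rewrite hS_a. Qed.
Lemma eS_pf' (X Y : BObj i.+1 j) (f : BHom X Y) (y : bS Y) (P : pred nat) :
  P (bA Y y) -> P (bA X (hSinv f y)).
Proof. by rewrite hS_inv_a. Qed.

Definition eHom (X Y : BObj i.+1 j) (f : BHom X Y) : BHom (eObj X) (eObj Y).
Proof.
pose fS (x : eS X) : eS Y :=
  exist _ (hS f (sval x)) (@eS_pf X Y f (sval x) (fun n => n < i) (proj2_sig x)).
pose gS (y : eS Y) : eS X :=
  exist _ (hSinv f (sval y)) (@eS_pf' X Y f (sval y) (fun n => n < i) (proj2_sig y)).
pose fL (x : eLast X) : eLast Y :=
  exist _ (hS f (sval x)) (@eS_pf X Y f (sval x) (fun n => n == i) (proj2_sig x)).
pose gL (y : eLast Y) : eLast X :=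
  exist _ (hSinv f (sval y)) (@eS_pf' X Y f (sval y) (fun n => n == i) (proj2_sig y)).
pose fP (u : eP X) : eP Y := match u with inl p => inl (hP f p) | inr x => inr (fL x) end.
pose gP (u : eP Y) : eP X := match u with inl p => inl (hPinv f p) | inr x => inr (gL x) end.
refine (@Build_BHom i j (eObj X) (eObj Y) fS gS _ _ _ fP gP _ _ _ _).
- by move=> x; apply: sig_eqE; rewrite /= hS_K.
- by move=> x; apply: sig_eqE; rewrite /= hS_K'.
- by move=> x; apply: ord_inj; rewrite /= hS_a.
- case=> [p|x] /=; [by rewrite hP_K|by congr inr; apply: sig_eqE; rewrite /= hS_K].
- case=> [p|x] /=; [by rewrite hP_K'|by congr inr; apply: sig_eqE; rewrite /= hS_K'].
- by case=> [p|x] //=; rewrite hP_b.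
- case=> [p|x] [q|y] //=; first by rewrite hP_le.
  apply/eqP/eqP => [H|->] //; apply: sig_eqE.
  by move/(congr1 sval): H => /= /(can_inj (hS_K f)).
Defined.
End ETop.
Arguments eObj {i j} X.
Arguments eHom {i j X Y} f.

Section TTop.
Variables i j : nat.

Definition disc (X : BObj i j) (p : bP X) : bool :=
  ((bB X p : nat) == 0) &&
  [forall q, (q != p) ==> ~~ ble X p q && ~~ ble X q p].
Arguments disc {X} p.

Definition tD (X : BObj i j) : finType := {p : bP X | disc p}.
Definition tS (X : BObj i j) : finType := (bS X + tD X)%type.
Definition tA (X : BObj i j) (u : tS X) : 'I_i.+1 :=
  match u with inl s => widen_ord (leqnSn i) (bA X s) | inr _ => ord_max end.
Definition tP (X : BObj i j) : finType := {p : bP X | ~~ disc p}.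
Definition tle (X : BObj i j) : rel (tP X) := fun u v => ble X (val u) (val v).
Definition tB (X : BObj i j) (u : tP X) : 'I_j.+1 := bB X (val u).

Definition tObj (X : BObj i j) : BObj i.+1 j.
Proof.
refine (@Build_BObj i.+1 j (tS X) (@tA X) (tP X) (@tle X) _ _ _ (@tB X) _).
- by move=> u; apply: ble_refl.
- by move=> u v H; apply: sig_eqE; apply: ble_anti.
- by move=> u v w; apply: ble_trans.
- by move=> u v; apply: bB_mono.
Defined.

Lemma disc_hom (X Y : BObj i j) (f : BHom X Y) p : disc (hP f p) = disc p.
Proof.
rewrite /disc hP_b; congr andb.
apply/forallP/forallP => H q.
- have := H (hP f q); rewrite !hP_le.
  by rewrite (inj_eq (can_inj (hP_K f))).
- have := H (hPinv f q).
  by rewrite -[q](hP_K' f) !hP_le (inj_eq (can_inj (hP_K f))) hP_K.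
Qed.

Lemma disc_hom_inv (X Y : BObj i j) (f : BHom X Y) p : disc (hPinv f p) = disc p.
Proof. by rewrite -(@disc_hom _ _ f) hP_K'. Qed.

Lemma tD_pf (X Y : BObj i j) (f : BHom X Y) (p : bP X) (P : pred bool) :
  P (disc p) -> P (disc (hP f p)).
Proof. by rewrite disc_hom. Qed.
Lemma tD_pf' (X Y : BObj i j) (f : BHom X Y) (p : bP Y) (P : pred bool) :
  P (disc p) -> P (disc (hPinv f p)).
Proof. by rewrite disc_hom_inv. Qed.

Definition tHom (X Y : BObj i j) (f : BHom X Y) : BHom (tObj X) (tObj Y).
Proof.
pose fD (d : tD X) : tD Y :=
  exist _ (hP f (sval d)) (@tD_pf X Y f (sval d) id (proj2_sig d)).
pose gD (d : tD Y) : tD X :=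
  exist _ (hPinv f (sval d)) (@tD_pf' X Y f (sval d) id (proj2_sig d)).
pose fS (u : tS X) : tS Y := match u with inl s => inl (hS f s) | inr d => inr (fD d) end.
pose gS (u : tS Y) : tS X := match u with inl s => inl (hSinv f s) | inr d => inr (gD d) end.
pose fP (p : tP X) : tP Y :=
  exist _ (hP f (sval p)) (@tD_pf X Y f (sval p) negb (proj2_sig p)).
pose gP (p : tP Y) : tP X :=
  exist _ (hPinv f (sval p)) (@tD_pf' X Y f (sval p) negb (proj2_sig p)).
refine (@Build_BHom i.+1 j (tObj X) (tObj Y) fS gS _ _ _ fP gP _ _ _ _).
- case=> [s|d] /=; [by rewrite hS_K|by congr inr; apply: sig_eqE; rewrite /= hP_K].
- case=> [s|d] /=; [by rewrite hS_K'|by congr inr; apply: sig_eqE; rewrite /= hP_K'].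
- by case=> [s|d] //=; apply: ord_inj; rewrite /= hS_a.
- by move=> p; apply: sig_eqE; rewrite /= hP_K.
- by move=> p; apply: sig_eqE; rewrite /= hP_K'.
- by move=> p; exact: hP_b.
- by move=> p q; exact: hP_le.
Defined.
End TTop.
Arguments disc {i j X} p.
Arguments tObj {i j} X.
Arguments tHom {i j X Y} f.

Section HFib.
Variables i j i' j' : nat.
Variable F : BObj i j -> BObj i' j'.
Variable Fh : forall X Y : BObj i j, BHom X Y -> BHom (F X) (F Y).
Variable Y : BObj i' j'.

Record hfib_ob := { hf_X : BObj i j; hf_beta : BHom (F hf_X) Y }.

Definition hfib_hom (u v : hfib_ob) : Type :=
  { a : BHom (hf_X u) (hf_X v) | heq (hcomp (hf_beta v) (Fh _ _ a)) (hf_beta u) }.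

Definition hfib_empty : Prop := hfib_ob -> False.

Definition hfib_contractible : Prop :=
  inhabited hfib_ob /\
  forall u v : hfib_ob, exists a : hfib_hom u v,
    forall b : hfib_hom u v, heq (proj1_sig b) (proj1_sig a).
End HFib.
Arguments hfib_ob {i j i' j'} F Y.
Arguments hfib_hom {i j i' j'} F Fh Y u v.
Arguments hfib_empty {i j i' j'} F Y.
Arguments hfib_contractible {i j i' j'} F Fh Y.

Definition groupoid_mono (i j i' j' : nat) (F : BObj i j -> BObj i' j')
  (Fh : forall X Y : BObj i j, BHom X Y -> BHom (F X) (F Y)) : Prop :=
  forall Y : BObj i' j', hfib_empty F Y \/ hfib_contractible F Fh Y.

(* Main.v *)
Set Warnings "-notation-overridden".
Require Import Defs.
From mathcomp Require Import all_boot.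
From Stdlib Require Import Classical.

Definition is_inl {T U : Type} (u : T + U) : bool := if u is inl _ then true else false.
Definition absurdF (T : Type) (H : false = true) : T :=
  False_rect T (eq_ind false (fun b => if b then False else True) I true H).
Definition ofl {T U : Type} (u : T + U) : is_inl u -> T :=
  match u return is_inl u -> T with inl t => fun _ => t | inr _ => fun H => absurdF T H end.
Definition ofr {T U : Type} (u : T + U) : ~~ is_inl u -> U :=
  match u return ~~ is_inl u -> U with inl _ => fun H => absurdF U H | inr x => fun _ => x end.
Lemma ofl_spec T U (u : T + U) H : u = inl (ofl u H).
Proof. by case: u H. Qed.
Lemma ofr_spec T U (u : T + U) H : u = inr (ofr u H).
Proof. by case: u H. Qed.

Definition bcase {A : Type} (b : bool) (ft : b = true -> A) (ff : b = false -> A) : A :=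
  (if b as c return b = c -> A then ft else ff) (erefl b).
Lemma bcaseT A b ft ff (H : b = true) : @bcase A b ft ff = ft H.
Proof. move: ft ff H; case: b => ft ff H //=; by rewrite (eq_irrelevance H erefl). Qed.
Lemma bcaseF A b ft ff (H : b = false) : @bcase A b ft ff = ff H.
Proof. move: ft ff H; case: b => ft ff H //=; by rewrite (eq_irrelevance H erefl). Qed.

Definition hinv i j (X Y : BObj i j) (f : BHom X Y) : BHom Y X :=
  @Build_BHom i j Y X (hSinv f) (hS f) (hS_K' f) (hS_K f) (@hS_inv_a _ _ _ _ f)
    (hPinv f) (hP f) (hP_K' f) (hP_K f) (@hP_inv_b _ _ _ _ f) (@hP_inv_le _ _ _ _ f).

Arguments hinv {i j X Y} f.
Section Main.
Variables i j : nat.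

Lemma disc_le (X : BObj i j) (p q : bP X) : disc p -> ble X p q = (p == q).
Proof.
case/andP=> _ /forallP H; case: (eqVneq p q) => [->|ne]; first by rewrite ble_refl.
by have := H q; rewrite eq_sym ne /= => /andP [/negbTE ->].
Qed.
Lemma disc_le' (X : BObj i j) (p q : bP X) : disc q -> ble X p q = (p == q).
Proof.
case/andP=> _ /forallP H; case: (eqVneq p q) => [->|ne]; first by rewrite ble_refl.
by have := H p; rewrite ne /= => /andP [_ /negbTE ->].
Qed.
Lemma disc_b (X : BObj i j) (p : bP X) : disc p -> bB X p = ord0.
Proof. by case/andP=> /eqP H _; apply: ord_inj. Qed.

Lemma tA_inl (X : BObj i j) (u : tS i j X) : (@tA i j X u : nat) < i -> is_inl u.
Proof. by case: u => //= d; rewrite ltnn. Qed.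
Lemma tA_inr (X : BObj i j) (u : tS i j X) : (@tA i j X u : nat) == i -> ~~ is_inl u.
Proof. by case: u => //= s; rewrite ltn_eqF. Qed.

Section Alpha.
Variables X X' : BObj i j.
Variable g : BHom (tObj X) (tObj X').

Lemma g_inl s : is_inl (hS g (inl s)).
Proof. apply: tA_inl; have := hS_a g (inl s) => /(congr1 val) /= ->; exact: ltn_ord. Qed.
Lemma g_inr (d : tD i j X) : ~~ is_inl (hS g (inr d)).
Proof. apply: tA_inr; by have := hS_a g (inr d) => /(congr1 val) /= ->. Qed.

Definition aS (s : bS X) : bS X' := @ofl _ _ _ (g_inl s).
Definition aP (p : bP X) : bP X' :=
  bcase (disc p) (fun H : disc p = true => val (@ofr _ _ _ (g_inr (exist _ p H))))
        (fun H => val (hP g (exist _ p (negbT H)))).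

Lemma aS_spec s : hS g (inl s) = inl (aS s).
Proof. exact: ofl_spec. Qed.
Lemma aS_a s : bA X' (aS s) = bA X s.
Proof.
apply: ord_inj; have := hS_a g (inl s); rewrite aS_spec => /(congr1 val) /= -> //.
Qed.
Lemma aP_d (d : tD i j X) : exists d', hS g (inr d) = inr d' /\ val d' = aP (val d).
Proof.
exists (@ofr _ _ _ (g_inr d)); split; first exact: ofr_spec.
case: d => p H /=; by rewrite /aP (bcaseT _ _ _ _ H).
Qed.
Lemma aP_n (q : tP i j X) : val (hP g q) = aP (val q).
Proof.
case: q => p H /=; have H' : disc p = false by apply: negbTE.
rewrite /aP (bcaseF _ _ _ _ H').
by rewrite (bool_irrelevance (negbT H') H).
Qed.
Lemma aP_disc p : disc (aP p) = disc p.
Proof.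
case: (boolP (disc p)) => H.
  have [? [_ E]] := aP_d (exist _ p H); rewrite /= in E; rewrite -E; exact: valP.
have E := aP_n (exist _ p H); rewrite /= in E; rewrite -E; apply: negbTE; by case: (hP g _).
Qed.
Lemma aP_b p : bB X' (aP p) = bB X p.
Proof.
case: (boolP (disc p)) => H.
  by rewrite !disc_b // aP_disc.
have E := aP_n (exist _ p H); rewrite /= in E; rewrite -E; exact: (hP_b g (exist _ p H)).
Qed.
End Alpha.
Arguments aS {X X'} g s.
Arguments aP {X X'} g p.
Arguments aS_spec {X X'} g s.
Arguments aS_a {X X'} g s.
Arguments aP_d {X X'} g d.
Arguments aP_n {X X'} g q.
Arguments aP_disc {X X'} g p.
Arguments aP_b {X X'} g p.

Lemma aP_K {X X' : BObj i j} (g : BHom (tObj X) (tObj X')) (h : BHom (tObj X') (tObj X)) :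
  cancel (hS g) (hS h) -> cancel (hP g) (hP h) -> cancel (aP g) (aP h).
Proof.
move=> KS KP p; case: (boolP (disc p)) => H.
  have [d' [E1 E2]] := aP_d g (exist _ p H).
  have [d'' [E3 E4]] := aP_d h d'.
  rewrite -E2 -E4; move: E3; rewrite /= -E1 KS; case=> <- //.
have := aP_n g (exist _ p H) => /= <-.
by rewrite -(aP_n h) /= KP.
Qed.

Lemma aS_K {X X' : BObj i j} (g : BHom (tObj X) (tObj X')) (h : BHom (tObj X') (tObj X)) :
  cancel (hS g) (hS h) -> cancel (aS g) (aS h).
Proof.
move=> KS s; have := aS_spec h (aS g s); rewrite /= -aS_spec KS.
by case=> <-.
Qed.

Lemma aP_le {X X' : BObj i j} (g : BHom (tObj X) (tObj X')) p q :
  ble X' (aP g p) (aP g q) = ble X p q.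
Proof.
have inj := can_inj (aP_K g (hinv g) (hS_K g) (hP_K g)).
case: (boolP (disc p)) => Hp.
  by rewrite !disc_le ?aP_disc // (inj_eq inj).
case: (boolP (disc q)) => Hq.
  by rewrite !disc_le' ?aP_disc // (inj_eq inj).
rewrite -(aP_n g (exist _ p Hp)) -(aP_n g (exist _ q Hq)).
exact: (hP_le g (exist _ p Hp) (exist _ q Hq)).
Qed.

Definition alpha {X X' : BObj i j} (g : BHom (tObj X) (tObj X')) : BHom X X' :=
  @Build_BHom i j X X' (aS g) (aS (hinv g)) (aS_K g (hinv g) (hS_K g)) (aS_K (hinv g) g (hS_K' g)) (aS_a g)
    (aP g) (aP (hinv g)) (aP_K g (hinv g) (hS_K g) (hP_K g)) (aP_K (hinv g) g (hS_K' g) (hP_K' g)) (aP_b g) (aP_le g).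

Lemma alpha_spec {X X' : BObj i j} (g : BHom (tObj X) (tObj X')) :
  (forall x, hS (tHom (alpha g)) x = hS g x) /\ (forall x, hP (tHom (alpha g)) x = hP g x).
Proof.
split.
  case=> [s|d] /=; first by rewrite aS_spec.
  have [d' [E1 E2]] := aP_d g d; rewrite E1; congr inr; apply: sig_eqE => /=; by rewrite E2.
by move=> q; apply: sig_eqE => /=; rewrite aP_n.
Qed.

Lemma tHom_inj {X X' : BObj i j} (a b : BHom X X') :
  (forall x, hS (tHom a) x = hS (tHom b) x) -> (forall x, hP (tHom a) x = hP (tHom b) x) ->
  heq a b.
Proof.
move=> HS HP; split.
  by move=> s; have := HS (inl s); case.
move=> p; case: (boolP (disc p)) => H.
  have := HS (inr (exist _ p H)) => /=.
  by move/(congr1 (fun u => if u is inr d then val d else hP a p)).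
by have := HP (exist _ p H) => /(congr1 val).
Qed.

Lemma eqS_inj (X Y : BObj i j) (a b : BHom X Y) :
  (forall x, hS (tHom a) x = hS (tHom b) x) -> forall s, hS a s = hS b s.
Proof. by move=> HS s; have := HS (inl s); case. Qed.

End Main.
Arguments alpha {i j X X'} g.
Arguments alpha_spec {i j X X'} g.
Arguments tHom_inj {i j X X'} a b.


Section Eta.
Variables i j : nat.
Variable X : BObj i j.

Definition etaS (x : eS i j (tObj X)) : bS X := @ofl _ _ (val x) (@tA_inl i j X _ (valP x)).
Definition etaSinv (s : bS X) : eS i j (tObj X) :=
  exist (fun x : bS (tObj X) => (bA (tObj X) x : nat) < i) (inl s) (ltn_ord (bA X s)).
Definition etaP (u : eP i j (tObj X)) : bP X :=
  match u with
  | inl q => val q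
  | inr x => val (@ofr _ _ (val x) (@tA_inr i j X _ (valP x)))
  end.
Definition etaPinv (p : bP X) : eP i j (tObj X) :=
  bcase (disc p)
    (fun H => inr (exist (fun x : bS (tObj X) => (bA (tObj X) x : nat) == i)
                      (inr (exist _ p H)) (eqxx i)))
    (fun H => inl (exist _ p (negbT H))).

Lemma etaS_K : cancel etaS etaSinv.
Proof.
case=> [[s|d] H]; first by apply: sig_eqE.
by exfalso; have H2 : i < i := H; rewrite ltnn in H2.
Qed.
Lemma etaS_K' : cancel etaSinv etaS.
Proof. by []. Qed.
Lemma etaS_a x : bA X (etaS x) = bA (eObj (tObj X)) x.
Proof.
case: x => [[s|d] H]; last by exfalso; have H2 : i < i := H; rewrite ltnn in H2.
by apply: ord_inj.
Qed.
Lemma etaP_K : cancel etaP etaPinv.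
Proof.
case=> [[p H]|[[s|[p H]] H']] /=.
- have H1 : disc p = false by apply: negbTE.
  rewrite /etaPinv (bcaseF _ _ _ _ H1); congr inl; exact: sig_eqE.
- by exfalso; have H2 : (bA X s : nat) == i := H'; rewrite ltn_eqF in H2.
- rewrite /etaPinv (bcaseT _ _ _ _ H); congr inr; exact: sig_eqE.
Qed.
Lemma etaP_K' : cancel etaPinv etaP.
Proof.
move=> p; case: (boolP (disc p)) => H.
  by rewrite /etaPinv (bcaseT _ _ _ _ H).
have H1 : disc p = false by apply: negbTE.
by rewrite /etaPinv (bcaseF _ _ _ _ H1).
Qed.
Lemma etaP_b u : bB X (etaP u) = bB (eObj (tObj X)) u.
Proof.
case: u => [[p H]|[[s|[p H]] H']] //=.
by exfalso; have H2 : (bA X s : nat) == i := H'; rewrite ltn_eqF in H2.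
by rewrite disc_b.
Qed.
Lemma etaP_disc x : disc (etaP (inr x)).
Proof.
case: x => [[s|[p H]] H'] //.
by exfalso; have H2 : (bA X s : nat) == i := H'; rewrite ltn_eqF in H2.
Qed.
Lemma etaP_le u v : ble X (etaP u) (etaP v) = ble (eObj (tObj X)) u v.
Proof.
have inj := can_inj etaP_K.
case: u => [q|x]; case: v => [q'|y] //.
- by rewrite disc_le' ?etaP_disc // (inj_eq inj).
- by rewrite disc_le ?etaP_disc // (inj_eq inj).
- by rewrite disc_le ?etaP_disc // (inj_eq inj).
Qed.

Definition eta : BHom (eObj (tObj X)) X :=
  @Build_BHom i j (eObj (tObj X)) X etaS etaSinv etaS_K etaS_K' etaS_a
    etaP etaPinv etaP_K etaP_K' etaP_b etaP_le.
End Eta.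

Theorem lemma3p2 (i j : nat) :
  (* t_{top+1} is a section of e_top = e_{i+1} : B_{i+1,j} -> B_{i,j}
     (e_top o t_{top+1} is naturally isomorphic to the identity) *)
  (exists eta : forall X : BObj i j, BHom (eObj (tObj X)) X,
     forall (X Y : BObj i j) (f : BHom X Y),
       heq (hcomp (eta Y) (eHom (tHom f))) (hcomp f (eta X)))
  /\
  (* t_{top+1} : B_{i,j} -> B_{i+1,j} is a monomorphism of groupoids *)
  @groupoid_mono i j i.+1 j (@tObj i j) (fun X Y (f : BHom X Y) => tHom f).
Proof.
split; last first.
  move=> Y; case: (classic (inhabited (hfib_ob (@tObj i j) Y))) => [inh|ninh]; last first.
    by left=> u; apply: ninh; constructor.
  right; split=> // [[Xu bu]] [Xv bv].
  pose g := hcomp (hinv bv) bu.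
  have [A1 A2] := alpha_spec g.
  have Ha : heq (hcomp bv (tHom (alpha g))) bu.
    split=> x.
      change (hS bv (hS (tHom (alpha g)) x) = hS bu x).
      by rewrite A1; change (hS bv (hSinv bv (hS bu x)) = hS bu x); rewrite hS_K'.
    change (hP bv (hP (tHom (alpha g)) x) = hP bu x).
    by rewrite A2; change (hP bv (hPinv bv (hP bu x)) = hP bu x); rewrite hP_K'.
  exists (exist _ (alpha g) Ha) => [[b Hb]] /=.
  case: Hb => HbS HbP.
  apply: tHom_inj => x.
    rewrite A1; apply: (can_inj (hS_K bv)).
    change (hS bv (hS (tHom b) x) = hS bv (hSinv bv (hS bu x))).
    by rewrite hS_K'; exact: HbS.
  rewrite A2; apply: (can_inj (hP_K bv)).
  change (hP bv (hP (tHom b) x) = hP bv (hPinv bv (hP bu x))).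
  by rewrite hP_K'; exact: HbP.
exists (eta i j) => X Y f; split.
  case=> [[s|d] H] //=.
  by exfalso; have H2 : i < i := H; rewrite ltnn in H2.
case=> [q|[[s|d] H]] //=.
by exfalso; have H2 : (bA X s : nat) == i := H; rewrite ltn_eqF in H2.
Qed.
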